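(* Let $A$ be a physical system of dimension $m$ whose Hamiltonian has a non-degenerate Bohr spectrum, with energy eigenbasis $\{|x\rangle\}$ and Gibbs state $\gamma^A$. Let $\rho,\sigma$ be states on $A$ with $r_{xy}\coloneqq\langle x|\rho|y\rangle$, $s_{xy}\coloneqq\langle x|\sigma|y\rangle$. Suppose $r_{xy}\neq0$ for all $x,y\in[m]$ and $r_{xx}=s_{xx}$ for all $x\in[m]$. Then there exists $\mathcal{E}\in\mathrm{GPC}(A\to A)$ with $\mathcal{E}(\rho)=\sigma$ if and only if $$Q^A\coloneqq I^A+\sum_{x\neq y\in[m]}\frac{s_{xy}}{r_{xy}}|x\rangle\langle y|^A\geq0.$$
   Context: The Hamiltonian $H^A=\sum_x a_x|x\rangle\langle x|$ has a non-degenerate Bohr spectrum if for all $x,y,x',y'$: $a_x-a_y=a_{x'}-a_{y'}$ holds iff ($x=x'$ and $y=y'$) or ($x=y$ and $x'=y'$). For fixed inverse temperature $\beta>0$ the Gibbs state is $\gamma^A=e^{-\beta H^A}/\mathrm{Tr}[e^{-\beta H^A}]$. $\mathrm{GPC}(A\to A)$ is the set of quantum channels $\mathcal{E}:A\to A$ with $\mathcal{E}(\gamma^A)=\gamma^A$ and $\mathcal{E}(e^{-iH^At}\rho e^{iH^At})=e^{-iH^At}\mathcal{E}(\rho)e^{iH^At}$ for all $t\in\mathbb{R}$ and states $\rho$. *)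

(* Defs.v *)
From HB Require Import structures.
From mathcomp Require Import all_boot all_order all_algebra.
From mathcomp.real_closed Require Import complex mxtens.
From mathcomp Require Import reals.
From mathcomp.analysis Require Import sequences exp trigo.
Set Implicit Arguments. Unset Strict Implicit. Unset Printing Implicit Defensive.
Import Order.TTheory GRing.Theory Num.Theory.
Local Open Scope ring_scope.
Local Open Scope complex_scope.

Section Defs.
Variable R : realType.
Local Notation C := R[i].

Definition adjmx m n (A : 'M[C]_(m, n)) : 'M[C]_(n, m) := (map_mx conjc A)^T.

Definition psd n (A : 'M[C]_n) : Prop :=
  adjmx A = A /\ forall v : 'cV[C]_n, 0 <= (adjmx v *m A *m v) 0 0.

Definition is_state n (rho : 'M[C]_n) : Prop := psd rho /\ \tr rho = 1.

(* ampliation id_n (x) E acting on block matrices 'M_(n*m),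
   index (i,a) <-> mxtens_index (i,a), i : 'I_n (ancilla), a : 'I_m (system) *)
Definition ampl n m (E : 'M[C]_m -> 'M[C]_m) (X : 'M[C]_(n * m)) : 'M[C]_(n * m) :=
  \matrix_(p, q)
    E (\matrix_(a, b) X (mxtens_index ((mxtens_unindex p).1, a))
                        (mxtens_index ((mxtens_unindex q).1, b)))
      (mxtens_unindex p).2 (mxtens_unindex q).2.

Definition quantum_channel m (E : 'M[C]_m -> 'M[C]_m) : Prop :=
  [/\ forall (c : C) (X Y : 'M[C]_m), E (c *: X + Y) = c *: E X + E Y,
      forall X, \tr (E X) = \tr X
    & forall n (X : 'M[C]_(n * m)), psd X -> psd (ampl E X)].

Definition nondeg_bohr m (a : 'I_m -> R) : Prop :=
  forall x y x' y' : 'I_m,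
    a x - a y = a x' - a y' <-> ((x = x' /\ y = y') \/ (x = y /\ x' = y')).

Definition hamiltonian m (a : 'I_m -> R) : 'M[C]_m :=
  diag_mx (\row_x ((a x)%:C)).

Definition evol m (a : 'I_m -> R) (t : R) : 'M[C]_m :=
  diag_mx (\row_x (cos (- (a x * t)) +i* sin (- (a x * t)))).

Definition gibbs m (a : 'I_m -> R) (beta : R) : 'M[C]_m :=
  diag_mx (\row_x ((expR (- beta * a x) / \sum_y expR (- beta * a y))%:C)).

Definition GPC m (a : 'I_m -> R) (beta : R) (E : 'M[C]_m -> 'M[C]_m) : Prop :=
  [/\ quantum_channel E,
      E (gibbs a beta) = gibbs a beta
    & forall (t : R) (rho : 'M[C]_m), is_state rho ->
        E (evol a t *m rho *m adjmx (evol a t))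
        = evol a t *m E rho *m adjmx (evol a t)].

Definition Qmx m (rho sigma : 'M[C]_m) : 'M[C]_m :=
  1%:M + \sum_(x : 'I_m) \sum_(y : 'I_m | x != y)
           (sigma x y / rho x y) *: delta_mx x y.
End Defs.

(* Main.v *)
Require Import Defs.
From HB Require Import structures.
From mathcomp Require Import all_boot all_order all_algebra.
From mathcomp.real_closed Require Import complex mxtens.
From mathcomp Require Import reals.
From mathcomp.analysis Require Import sequences exp trigo.
From mathcomp Require Import ring.
Import Order.TTheory GRing.Theory Num.Theory.
Local Open Scope ring_scope.
Set Implicit Arguments. Unset Strict Implicit. Unset Printing Implicit Defensive.
Section Aux.
Variable R : realType.
Local Notation C := R[i].
Local Open Scope complex_scope.

Definition qf n (A : 'M[C]_n) (f g : 'I_n -> C) :=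
  \sum_i \sum_j conjc (f i) * A i j * g j.

Definition dlt n (a : 'I_n) : 'I_n -> C := fun k => (k == a)%:R.
Arguments dlt {n} a k.

Lemma cc_ge0 (x : C) : 0 <= x * conjc x.
Proof. exact: mul_conjC_ge0. Qed.

Lemma cc_eq0 (x : C) : (x * conjc x == 0) = (x == 0).
Proof. exact: mul_conjC_eq0. Qed.

Lemma conj_ge0 (x : C) : 0 <= x -> conjc x = x.
Proof. by move=> h; apply: (@conj_Creal _ x); apply: ger0_real. Qed.

Lemma adjmxE m n (A : 'M[C]_(m, n)) i j : adjmx A i j = conjc (A j i).
Proof. by rewrite !mxE. Qed.

Lemma adjmx_mul m n p (A : 'M[C]_(m, n)) (B : 'M[C]_(n, p)) :
  adjmx (A *m B) = adjmx B *m adjmx A.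
Proof. by rewrite /adjmx map_mxM trmx_mul. Qed.

Lemma hermP n (A : 'M[C]_n) : adjmx A = A -> forall i j, conjc (A j i) = A i j.
Proof. by move=> h i j; rewrite -adjmxE h. Qed.

Lemma hermE n (A : 'M[C]_n) : (forall i j, conjc (A j i) = A i j) -> adjmx A = A.
Proof. by move=> h; apply/matrixP => i j; rewrite adjmxE h. Qed.

Lemma formE n (A : 'M[C]_n) (v : 'cV[C]_n) :
  (adjmx v *m A *m v) 0 0 = qf A (fun i => v i 0) (fun j => v j 0).
Proof.
rewrite mxE /qf; under eq_bigr do rewrite mxE big_distrl /=.
rewrite exchange_big; apply: eq_bigr => i _; apply: eq_bigr => j _.
by rewrite !mxE.
Qed.

Lemma qf_ext n (A : 'M[C]_n) f f' g g' :
  (forall i, f i = f' i) -> (forall i, g i = g' i) -> qf A f g = qf A f' g'.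
Proof.
move=> hf hg; apply: eq_bigr => i _; apply: eq_bigr => j _.
by rewrite hf hg.
Qed.

Lemma psdP n (A : 'M[C]_n) :
  psd A <-> (adjmx A = A /\ forall f, 0 <= qf A f f).
Proof.
split=> [[hA hf]|[hA hf]]; split=> //.
  move=> f; have := hf (\col_i f i); rewrite formE.
  by rewrite (@qf_ext _ _ _ f _ f) // => i; rewrite mxE.
by move=> v; rewrite formE.
Qed.

Lemma qf_conj n (A : 'M[C]_n) f g : adjmx A = A ->
  conjc (qf A f g) = qf A g f.
Proof.
move=> hA; rewrite /qf rmorph_sum exchange_big /=; apply: eq_bigr => j _.
rewrite rmorph_sum /=; apply: eq_bigr => i _.
rewrite !rmorphM /= conjcK (hermP hA); ring.
Qed.

Lemma sum_dltl n (k : 'I_n) (F : 'I_n -> C) :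
  \sum_p (p == k)%:R * F p = F k.
Proof.
rewrite (bigD1 k) //= eqxx mul1r big1 ?addr0 // => p /negbTE ->.
by rewrite mul0r.
Qed.

Lemma sum_dltr n (k : 'I_n) (F : 'I_n -> C) :
  \sum_p F p * (p == k)%:R = F k.
Proof. by rewrite -[RHS]sum_dltl; apply: eq_bigr => p _; rewrite mulrC. Qed.

Lemma qf_dlt_l n (A : 'M[C]_n) a g : qf A (dlt a) g = \sum_j A a j * g j.
Proof.
rewrite /qf /dlt (eq_bigr (fun i => (i == a)%:R * \sum_j A i j * g j)).
  by rewrite sum_dltl.
by move=> i _; rewrite big_distrr; apply: eq_bigr => j _ /=; rewrite conjc_nat mulrA.
Qed.

Lemma qf_dlt_r n (A : 'M[C]_n) f b : qf A f (dlt b) = \sum_i conjc (f i) * A i b.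
Proof.
rewrite /qf /dlt; apply: eq_bigr => i _.
by rewrite sum_dltr.
Qed.

Lemma qf_dlt n (A : 'M[C]_n) a b : qf A (dlt a) (dlt b) = A a b.
Proof. by rewrite qf_dlt_l sum_dltr. Qed.

Lemma qf_lin_l n (A : 'M[C]_n) f g h c :
  qf A (fun k => f k + c * g k) h = qf A f h + conjc c * qf A g h.
Proof.
rewrite /qf mulr_sumr -big_split; apply: eq_bigr => i _ /=.
rewrite mulr_sumr -big_split; apply: eq_bigr => j _ /=.
rewrite rmorphD rmorphM /=; ring.
Qed.

Lemma qf_lin_r n (A : 'M[C]_n) f g h c :
  qf A h (fun k => f k + c * g k) = qf A h f + c * qf A h g.
Proof.
rewrite /qf mulr_sumr -big_split; apply: eq_bigr => i _ /=.
rewrite mulr_sumr -big_split; apply: eq_bigr => j _ /=; ring.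
Qed.

Lemma qf_add n (A B : 'M[C]_n) f g : qf (A + B) f g = qf A f g + qf B f g.
Proof.
rewrite /qf -big_split; apply: eq_bigr => i _ /=.
rewrite -big_split; apply: eq_bigr => j _ /=; rewrite mxE; ring.
Qed.

Lemma qf_scale n (A : 'M[C]_n) c f g : qf (c *: A) f g = c * qf A f g.
Proof.
rewrite /qf mulr_sumr; apply: eq_bigr => i _ /=.
rewrite mulr_sumr; apply: eq_bigr => j _ /=; rewrite mxE; ring.
Qed.

Lemma qf0 n f g : qf (0 : 'M[C]_n) f g = 0.
Proof. by rewrite /qf big1 // => i _; rewrite big1 // => j _; rewrite mxE mulr0 mul0r. Qed.

Lemma rank1E n (w : 'cV[C]_n) i j : (w *m adjmx w) i j = w i 0 * conjc (w j 0).
Proof. by rewrite mxE big_ord1 adjmxE. Qed.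

Lemma qf_rank1 n (w : 'cV[C]_n) f g :
  qf (w *m adjmx w) f g =
  (\sum_i conjc (f i) * w i 0) * (\sum_j conjc (w j 0) * g j).
Proof.
rewrite /qf big_distrl; apply: eq_bigr => i _ /=.
rewrite big_distrr; apply: eq_bigr => j _ /=; rewrite rank1E; ring.
Qed.

Lemma psd_rank1 n (w : 'cV[C]_n) : psd (w *m adjmx w).
Proof.
apply/psdP; split.
  by apply: hermE => i j; rewrite !rank1E rmorphM /= conjcK mulrC.
move=> f; rewrite qf_rank1.
set s := (\sum_i _).
have -> : \sum_j conjc (w j 0) * f j = conjc s.
  rewrite /s rmorph_sum; apply: eq_bigr => j _ /=.
  by rewrite rmorphM /= conjcK mulrC.
exact: cc_ge0.
Qed.

Lemma psd_scale n (A : 'M[C]_n) c : 0 <= c -> psd A -> psd (c *: A).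
Proof.
move=> hc /psdP [hA hf]; apply/psdP; split.
  apply: hermE => i j; rewrite !mxE rmorphM /= (hermP hA) conj_ge0 //.
by move=> f; rewrite qf_scale mulr_ge0.
Qed.

Lemma psd_add n (A B : 'M[C]_n) : psd A -> psd B -> psd (A + B).
Proof.
move=> /psdP [hA fA] /psdP [hB fB]; apply/psdP; split.
  by apply: hermE => i j; rewrite !mxE rmorphD /= (hermP hA) (hermP hB).
by move=> f; rewrite qf_add addr_ge0.
Qed.

Lemma psd_diag_ge0 n (A : 'M[C]_n) i : psd A -> 0 <= A i i.
Proof. by move=> /psdP [_ h]; have := h (dlt i); rewrite qf_dlt. Qed.

End Aux.
Arguments dlt {R n} a k.
Section Aux2.
Variable R : realType.
Local Notation C := R[i].
Local Open Scope complex_scope.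

Lemma ge0_le0_eq0 (x : C) : 0 <= x -> x <= 0 -> x = 0.
Proof. by move=> h1 h2; apply/le_anti; rewrite h1 h2. Qed.

Lemma psd_diag0 n (A : 'M[C]_n) i j : psd A -> A i i = 0 -> A j j = 0 -> A i j = 0.
Proof.
move=> hA hi hj; have /psdP [hA' hf] := hA.
set z := A i j.
set t := - conjc z.
have e : qf A (fun k => dlt i k + t * dlt j k) (fun k => dlt i k + t * dlt j k)
   = - ((z * conjc z) *+ 2).
  rewrite qf_lin_l !qf_lin_r !qf_dlt hi hj -(hermP hA' j i) /t -/z.
  rewrite rmorphN /= conjcK; ring.
have := hf (fun k => dlt i k + t * dlt j k); rewrite e oppr_ge0 => h.
have hx := cc_ge0 z.
have : z * conjc z <= 0.
  apply: le_trans h; rewrite mulr2n lerDl //.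
move=> h2; have := ge0_le0_eq0 hx h2.
by move/eqP; rewrite cc_eq0 => /eqP.
Qed.

Lemma psd_zero n (A : 'M[C]_n) : psd A -> (forall i, A i i = 0) -> A = 0.
Proof.
move=> hA h; apply/matrixP => i j; rewrite mxE.
exact: psd_diag0.
Qed.

Definition schur n (A : 'M[C]_n) i :=
  A + (- (A i i)^-1) *: (col i A *m adjmx (col i A)).

Lemma schurE n (A : 'M[C]_n) i x y :
  schur A i x y = A x y - (A i i)^-1 * (A x i * conjc (A y i)).
Proof. by rewrite /schur mxE [X in _ + X]mxE rank1E !mxE mulNr. Qed.

Lemma schur_psd n (A : 'M[C]_n) i : psd A -> A i i != 0 -> psd (schur A i).
Proof.
move=> hA hd; have /psdP [hA' hf] := hA.
set d := A i i.
have d0 : 0 <= d by apply: psd_diag_ge0.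
have cd : conjc d = d by apply: conj_ge0.
apply/psdP; split.
  apply: hermE => x y; rewrite !schurE rmorphB /= !rmorphM /= conjc_inv -/d cd conjcK.
  rewrite !(hermP hA'); ring.
move=> f.
set al := qf A (dlt i) f.
set u := fun k => f k + (- (al / d)) * dlt i k.
have -> : qf (schur A i) f f = qf A u u.
  rewrite qf_add qf_scale qf_rank1 qf_lin_l !qf_lin_r qf_dlt -/d.
  have -> : \sum_k conjc (f k) * col i A k 0 = conjc al.
    rewrite /al qf_conj // qf_dlt_r; apply: eq_bigr => k _; by rewrite mxE.
  have -> : \sum_k conjc (col i A k 0) * f k = al.
    rewrite /al qf_dlt_l; apply: eq_bigr => k _; by rewrite mxE (hermP hA').
  rewrite -/al (qf_conj _ _ hA') -/al rmorphN /= rmorphM /= conjc_inv cd.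
  field; exact: hd.
exact: hf.
Qed.

Lemma schur_card n (A : 'M[C]_n) i : psd A -> A i i != 0 ->
  (#|[pred j | schur A i j j != 0%R]| < #|[pred j | A j j != 0%R]|)%N.
Proof.
move=> hA hd; have /psdP [hA' hf] := hA.
have hS := schur_psd hA hd.
have d0 : 0 <= A i i by apply: psd_diag_ge0.
have cd : conjc (A i i) = A i i by apply: conj_ge0.
have sub : [pred j | schur A i j j != 0%R] \subset [predD1 [pred j | A j j != 0%R] & i].
  apply/subsetP => j; rewrite !inE /= => hj; apply/andP; split.
    apply: contraNneq hj => ->; rewrite schurE cd mulrA mulVf // mul1r subrr //.
  apply: contraNneq hj => hjj; apply/eqP; apply: ge0_le0_eq0.
    exact: psd_diag_ge0.
  rewrite schurE hjj sub0r oppr_le0; apply: mulr_ge0; last exact: cc_ge0.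
  by rewrite invr_ge0.
rewrite [X in (_ < X)%N](cardD1 i) inE /= hd add1n ltnS.
exact: subset_leq_card.
Qed.

Lemma psd_decomp n (A : 'M[C]_n) : psd A ->
  exists s : seq (C * 'cV[C]_n), all (fun p => 0 <= p.1) s /\
    A = \sum_(p <- s) p.1 *: (p.2 *m adjmx p.2).
Proof.
move=> hA.
move: {2}#|[pred j | A j j != 0%R]| (leqnn #|[pred j | A j j != 0%R]|) => k.
elim: k A hA => [|k IH] A hA hk.
  exists [::]; split => //; rewrite big_nil; apply: psd_zero => // i.
  apply/eqP; apply: contraTT hk => hi; rewrite -ltnNge.
  by apply/card_gt0P; exists i.
case: (pickP [pred j | A j j != 0%R]) => [i /= hi|h0]; last first.
  exists [::]; split => //; rewrite big_nil; apply: psd_zero => // i.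
  by apply/eqP; have := h0 i => /= /negbFE.
have [s [hs e]] := IH (schur A i) (schur_psd hA hi)
  (leq_trans (schur_card hA hi) hk).
exists (((A i i)^-1, col i A) :: s); split.
  rewrite /= hs andbT invr_ge0; exact: psd_diag_ge0.
rewrite big_cons /= -e /schur scaleNr addrC addrNK //.
Qed.

End Aux2.
Section Aux3.
Variable R : realType.
Local Notation C := R[i].
Local Open Scope complex_scope.

Definition had N m (f : 'I_N -> 'I_m) (Q : 'M[C]_m) (X : 'M[C]_N) : 'M[C]_N :=
  \matrix_(p, q) (Q (f p) (f q) * X p q).

Lemma had_add N m (f : 'I_N -> 'I_m) Q1 Q2 X :
  had f (Q1 + Q2) X = had f Q1 X + had f Q2 X.
Proof. by apply/matrixP => p q; rewrite !mxE mulrDl. Qed.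

Lemma had0 N m (f : 'I_N -> 'I_m) X : had f 0 X = 0.
Proof. by apply/matrixP => p q; rewrite !mxE mul0r. Qed.

Lemma had_rank1 N m (f : 'I_N -> 'I_m) c (w : 'cV[C]_m) X g :
  qf (had f (c *: (w *m adjmx w)) X) g g =
  c * qf X (fun q => conjc (w (f q) 0) * g q) (fun q => conjc (w (f q) 0) * g q).
Proof.
rewrite /qf mulr_sumr; apply: eq_bigr => p _; rewrite mulr_sumr.
apply: eq_bigr => q _; rewrite /had mxE. rewrite mxE rank1E rmorphM /= conjcK.
ring.
Qed.

Lemma psd_had N m (f : 'I_N -> 'I_m) Q X : psd Q -> psd X -> psd (had f Q X).
Proof.
move=> hQ hX; have /psdP [hQ' _] := hQ; have /psdP [hX' fX] := hX.
apply/psdP; split.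
  by apply: hermE => p q; rewrite !mxE rmorphM /= (hermP hQ') (hermP hX').
move=> g.
have [s [hs ->]] := psd_decomp hQ.
rewrite (big_morph (fun Q => qf (had f Q X) g g) (id1 := 0) (op1 := +%R)
   (id2 := 0) (op2 := +%R)).
- rewrite big_seq; apply: sumr_ge0 => p hp; have hp1 := allP hs p hp.
  by rewrite had_rank1 mulr_ge0.
- by move=> Q1 Q2 /=; rewrite had_add qf_add.
- by rewrite had0 qf0.
Qed.

End Aux3.
Section Aux4.
Variable R : realType.
Local Notation C := R[i].
Local Open Scope complex_scope.

Lemma QmxE m (rho sigma : 'M[C]_m) i j :
  Qmx rho sigma i j = if i == j then 1 else sigma i j / rho i j.
Proof.
rewrite /Qmx mxE summxE (eq_bigr (fun x => (x == i)%:R * \sum_y ((y == j)%:R *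
   (if i == j then 0 else sigma i j / rho i j)))).
  rewrite sum_dltl sum_dltl mxE.
  by case: eqVneq => _ /=; rewrite ?mulr1n ?mulr0n ?addr0 ?add0r.
move=> x _; rewrite summxE big_mkcond big_distrr; apply: eq_bigr => y _ /=.
rewrite !mxE.
have [->|hx] := eqVneq x i; have [->|hy] := eqVneq y j.
- by case: (i == j); rewrite /= ?mulr1 ?mul1r.
- by rewrite andbF /= mul1r mul0r; case: ifP => _; rewrite ?mulr0.
- by rewrite /= mul0r; case: ifP => _; rewrite ?mulr0.
- by rewrite /= mul0r; case: ifP => _; rewrite ?mulr0.
Qed.

Definition hadQ m (Q X : 'M[C]_m) : 'M[C]_m := \matrix_(i, j) (Q i j * X i j).

Lemma diag_conjE m (d : 'rV[C]_m) X i j :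
  (diag_mx d *m X *m adjmx (diag_mx d)) i j = d 0 i * X i j * conjc (d 0 j).
Proof.
rewrite mxE (bigD1 j) //= big1 ?addr0.
  by rewrite adjmxE mul_diag_mx !mxE eqxx mulr1n.
move=> k hk; rewrite adjmxE [diag_mx d j k]mxE eq_sym (negbTE hk) mulr0n.
by rewrite conjc0 mulr0.
Qed.

Lemma if_dir m (a : 'I_m -> R) beta (rho sigma : 'M[C]_m) :
  (forall x y, rho x y != 0) -> (forall x, rho x x = sigma x x) ->
  psd (Qmx rho sigma) ->
  exists E, GPC a beta E /\ E rho = sigma.
Proof.
move=> hr hd hQ.
exists (hadQ (Qmx rho sigma)); split; [split; [split|..]|].
- by move=> c X Y; apply/matrixP => i j; rewrite !mxE; ring.
- by move=> X; rewrite /mxtrace; apply: eq_bigr => i _; rewrite mxE QmxE eqxx mul1r.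
- move=> n X hX.
  have -> : ampl (hadQ (Qmx rho sigma)) X = had (fun p => (mxtens_unindex p).2) (Qmx rho sigma) X.
    by apply/matrixP => p q; rewrite !mxE -!surjective_pairing !mxtens_unindexK.
  exact: psd_had.
- apply/matrixP => i j; rewrite /gibbs mxE QmxE !mxE.
  by case: eqVneq => [->|ne]; rewrite ?mul1r // !mulr0n mulr0.
- move=> t X _; apply/matrixP => i j; rewrite /evol mxE !diag_conjE !mxE; ring.
- apply/matrixP => i j; rewrite mxE QmxE.
  by case: eqVneq => [->|ne]; rewrite ?mul1r ?hd // divfK.
Qed.

End Aux4.
Section Aux5.
Variable R : realType.
Local Notation C := R[i].
Local Open Scope complex_scope.

Definition Ii : C := 0 +i* 1.

Lemma IiIi : Ii * Ii = -1.
Proof. by apply/eqP; rewrite eq_complex /= !(mulr0, mul0r, mulr1) sub0r addr0 oppr0 !eqxx. Qed.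

Lemma conjIi : conjc Ii = - Ii.
Proof. by apply/eqP; rewrite eq_complex /= oppr0 !eqxx. Qed.

Lemma phase_mul (p q : R) :
  (cos p +i* sin p) * conjc (cos q +i* sin q) = cos (p - q) +i* sin (p - q).
Proof.
apply/eqP; rewrite eq_complex /= cosB sinB; apply/andP; split; apply/eqP; ring.
Qed.

Lemma phase_neq (q : R) : (cos (q - pi) +i* sin (q - pi)) != cos q +i* sin q.
Proof.
apply/negP => /eqP e.
have e1 : cos (q - pi) = cos q by move: e => [].
have e2 : sin (q - pi) = sin q by move: e => [].
rewrite cosB sinB cospi sinpi in e1 e2.
have c0 : cos q = 0.
  have : cos q *+ 2 = 0 by rewrite mulr2n -{1}e1; ring.
  by move/eqP; rewrite mulrn_eq0 /= => /eqP.
have s0 : sin q = 0.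
  have : sin q *+ 2 = 0 by rewrite mulr2n -{1}e2; ring.
  by move/eqP; rewrite mulrn_eq0 /= => /eqP.
have := cos2Dsin2 q; rewrite c0 s0 expr0n /= addr0 => /eqP.
by rewrite eq_sym oner_eq0.
Qed.

End Aux5.
Arguments Ii {R}. Arguments IiIi {R}. Arguments conjIi {R}.
Section Aux6.
Variable R : realType.
Local Notation C := R[i].
Local Open Scope complex_scope.

Definition linE m (E : 'M[C]_m -> 'M[C]_m) :=
  forall c X Y, E (c *: X + Y) = c *: E X + E Y.

Lemma ch0 m (E : 'M[C]_m -> 'M[C]_m) : linE E -> E 0 = 0.
Proof. by move=> h; have := h (-1) 0 0; rewrite scaler0 add0r scaleN1r addNr. Qed.

Lemma chD m (E : 'M[C]_m -> 'M[C]_m) : linE E -> forall X Y, E (X + Y) = E X + E Y.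
Proof. by move=> h X Y; have := h 1 X Y; rewrite !scale1r. Qed.

Lemma chZ m (E : 'M[C]_m -> 'M[C]_m) : linE E -> forall c X, E (c *: X) = c *: E X.
Proof. by move=> h c X; have := h c X 0; rewrite !addr0 ch0 // addr0. Qed.

Lemma chS m (E : 'M[C]_m -> 'M[C]_m) I (r : seq I) (P : pred I) F : linE E ->
  E (\sum_(i <- r | P i) F i) = \sum_(i <- r | P i) E (F i).
Proof. by move=> h; apply: big_morph; [exact: chD | exact: ch0]. Qed.

Definition wv m (x y : 'I_m) (c : C) : 'cV[C]_m :=
  \col_k ((k == x)%:R + c * (k == y)%:R).

Lemma cc1 : (1 -i* 0 : C) = 1.
Proof. by apply/eqP; rewrite eq_complex /= oppr0 !eqxx. Qed.

Lemma ccIi : ((-1)*i : C) = - Ii.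
Proof. by apply/eqP; rewrite eq_complex /= oppr0 !eqxx. Qed.

Lemma id4 (I a b c d X : C) : I * I = -1 ->
  X = 1 * (2^-1 * ((a + 1 * b) * (c + 1 * d))) +
      (I * (2^-1 * ((a + I * b) * (c + (- I) * d))) +
      (- (1 + I) / 2 * (a * c) + (- (1 + I) / 2 * (b * d) + 0))) ->
  X = a * d.
Proof.
move=> hI ->; apply/eqP; rewrite -subr_eq0; apply/eqP.
have h2 : (2 : C) != 0 by rewrite pnatr_eq0.
transitivity ((I * I + 1) * ((- (a * d) + b * c - I * (b * d)) / 2)).
  by field.
by rewrite hI addNr mul0r.
Qed.

Lemma state_w m (x y : 'I_m) (c : C) : x != y -> c * conjc c = 1 ->
  is_state (2^-1 *: (wv x y c *m adjmx (wv x y c))).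
Proof.
move=> hxy hc; split.
  apply: psd_scale; last exact: psd_rank1.
  by rewrite invr_ge0 ler0n.
rewrite /mxtrace (eq_bigr (fun k => 2^-1 * (wv x y c k 0 * conjc (wv x y c k 0)))); last first.
  by move=> k _; rewrite mxE rank1E.
rewrite -mulr_sumr (bigD1 x) //= (bigD1 y) 1?eq_sym //= big1 ?addr0.
  rewrite !mxE !eqxx (negbTE hxy) eq_sym (negbTE hxy) /=.
  rewrite !(mulr0, mulr1, addr0, add0r) conjc1 mulr1 hc.
  have h2 : (2 : C) != 0 by rewrite pnatr_eq0.
  by field.
move=> k /andP [hky hkx]; rewrite !mxE (negbTE hkx) (negbTE hky) mulr0 addr0.
by rewrite mul0r.
Qed.

Lemma state_delta m (x : 'I_m) : is_state (delta_mx x x : 'M[C]_m).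
Proof.
have -> : (delta_mx x x : 'M[C]_m) = \col_k ((k == x)%:R : C) *m adjmx (\col_k ((k == x)%:R : C)).
  by apply/matrixP => k l; rewrite rank1E !mxE conjc_nat -natrM mulnb.
split; first exact: psd_rank1.
rewrite /mxtrace (eq_bigr (fun k => (k == x)%:R * 1)).
  by rewrite sum_dltl.
by move=> k _; rewrite rank1E !mxE conjc_nat mulr1; case: (k == x); rewrite ?mulr1 ?mulr0.
Qed.

Lemma cov_delta m (U : 'M[C]_m) (E : 'M[C]_m -> 'M[C]_m) : linE E ->
  (forall X, is_state X -> E (U *m X *m adjmx U) = U *m E X *m adjmx U) ->
  forall x y, E (U *m delta_mx x y *m adjmx U) = U *m E (delta_mx x y) *m adjmx U.
Proof.
move=> hl hst x y.
pose P X := E (U *m X *m adjmx U) = U *m E X *m adjmx U.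
have L : forall c Z W, U *m (c *: Z + W) *m adjmx U = c *: (U *m Z *m adjmx U) + U *m W *m adjmx U.
  by move=> c Z W; rewrite mulmxDr mulmxDl -scalemxAr -scalemxAl.
have comb : forall c X Y, P X -> P Y -> P (c *: X + Y).
  by move=> c X Y hX hY; rewrite /P L hl hX hY hl L.
have P0 : P 0.
  have hX := hst _ (state_delta x).
  by have := comb (-1) _ _ hX hX; rewrite scaleN1r addNr.
case: (eqVneq x y) => [<-|hxy]; first exact: hst (state_delta x).
have -> : (delta_mx x y : 'M[C]_m) =
  1 *: (2^-1 *: (wv x y 1 *m adjmx (wv x y 1))) +
  (Ii *: (2^-1 *: (wv x y Ii *m adjmx (wv x y Ii))) +
  ((- (1 + Ii) / 2) *: delta_mx x x + ((- (1 + Ii) / 2) *: delta_mx y y + 0))).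
  apply/matrixP => k l.
  rewrite !mxE !big_ord1 !mxE !rmorphD !rmorphM /= !conjc_nat cc1 ccIi.
  rewrite -!mulnb !natrM; symmetry.
  apply: (@id4 Ii ((k==x)%:R) ((k==y)%:R) ((l==x)%:R) ((l==y)%:R) _ IiIi).
  ring.
have c1 : (1 : C) * conjc 1 = 1 by rewrite rmorph1 mulr1.
have ci : (Ii : C) * conjc Ii = 1.
  by apply/eqP; rewrite eq_complex /= !(mulr0, mul0r, mulr1, mul1r, mulrN, mulNr, opprK, oppr0, subr0, sub0r, addr0) !eqxx.
apply: (comb); first exact: (hst _ (state_w hxy c1)).
apply: (comb); first exact: (hst _ (state_w hxy ci)).
apply: (comb); first exact: (hst _ (state_delta x)).
apply: (comb); first exact: (hst _ (state_delta y)).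
exact: P0.
Qed.
End Aux6.
Section Aux7.
Variable R : realType.
Local Notation C := R[i].
Local Open Scope complex_scope.

Lemma adjmxK m n (A : 'M[C]_(m, n)) : adjmx (adjmx A) = A.
Proof. by apply/matrixP => i j; rewrite !adjmxE conjcK. Qed.

Lemma psd_congr N m (P : 'M[C]_(N, m)) G : psd G -> psd (adjmx P *m G *m P).
Proof.
move=> [hG hf]; split.
  by rewrite !adjmx_mul adjmxK hG mulmxA.
move=> v.
have -> : adjmx v *m (adjmx P *m G *m P) *m v = adjmx (P *m v) *m G *m (P *m v).
  by rewrite adjmx_mul !mulmxA.
exact: hf.
Qed.

Lemma compressE N m (h : 'I_m -> 'I_N) (G : 'M[C]_N) x y :
  let P := \matrix_(p, x) ((p == h x)%:R : C) in
  (adjmx P *m G *m P) x y = G (h x) (h y).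
Proof.
move=> P.
rewrite mxE (eq_bigr (fun q => (adjmx P *m G) x q * (q == h y)%:R)); last first.
  by move=> q _; rewrite [P _ _]mxE.
rewrite sum_dltr mxE (eq_bigr (fun p => (p == h x)%:R * G p (h y))).
  by rewrite sum_dltl.
by move=> p _; rewrite adjmxE [P _ _]mxE conjc_nat.
Qed.

Lemma psd_diagm m (d : 'I_m -> C) : (forall i, 0 <= d i) -> psd (diag_mx (\row_i d i)).
Proof.
move=> hd; apply/psdP; split.
  apply: hermE => i j; rewrite !mxE.
  case: (eqVneq i j) => [->|ne]; first by rewrite !mulr1n conj_ge0.
  by rewrite !mulr0n conjc0.
move=> f; apply: sumr_ge0 => i _.
rewrite (bigD1 i) //= big1 ?addr0.
  rewrite !mxE eqxx mulr1n.
  have -> : conjc (f i) * d i * f i = d i * (f i * conjc (f i)) by ring.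
  by rewrite mulr_ge0 ?cc_ge0.
by move=> j hj; rewrite !mxE eq_sym (negbTE hj) mulr0n mulr0 mul0r.
Qed.

Lemma off_zero m (a : 'I_m -> R) (E : 'M[C]_m -> 'M[C]_m) : linE E ->
  (forall t rho, is_state rho -> E (evol a t *m rho *m adjmx (evol a t))
        = evol a t *m E rho *m adjmx (evol a t)) ->
  nondeg_bohr a -> forall x y z w, z != w -> (x, y) != (z, w) ->
  E (delta_mx x y) z w = 0.
Proof.
move=> hl hcov hnd x y z w hzw hne.
set om := (a x - a y) - (a z - a w).
have hom : om != 0.
  rewrite subr_eq0; apply/eqP => e; have [h _] := hnd x y z w.
  case: (h e) => [[e1 e2]|[e1 e2]].
    by move: hne; rewrite e1 e2 eqxx.
  by move: hzw; rewrite e2 eqxx.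
set t := pi / om.
have hc := cov_delta hl (hcov t) x y.
have L : evol a t *m delta_mx x y *m adjmx (evol a t) =
   ((cos (- (a x * t)) +i* sin (- (a x * t))) * conjc (cos (- (a y * t)) +i* sin (- (a y * t))))
     *: delta_mx x y.
  apply/matrixP => k l; rewrite /evol diag_conjE !mxE.
  case: (eqVneq k x) => [->|hk]; case: (eqVneq l y) => [->|hl'];
    rewrite ?eqxx ?(negbTE hk) ?(negbTE hl') ?andbF /= ?mulr0 ?mul0r //.
  by rewrite mulr1 mulr1.
move/matrixP: hc => /(_ z w); rewrite L chZ // /evol diag_conjE !mxE.
rewrite phase_mul mulrAC phase_mul => e.
have neq := phase_neq (- (a z * t) - - (a w * t)).
have et : - (a x * t) - - (a y * t) = - (a z * t) - - (a w * t) - pi.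
  by rewrite /t /om; field.
rewrite -et in neq.
move/eqP: e; rewrite -subr_eq0 -mulrBl mulf_eq0 subr_eq0 (negbTE neq) /=.
by move/eqP.
Qed.

End Aux7.
Section Aux8.
Variable R : realType.
Local Notation C := R[i].
Local Open Scope complex_scope.

Lemma onlyif_dir m (a : 'I_m -> R) beta (rho sigma : 'M[C]_m) :
  nondeg_bohr a -> (forall x y, rho x y != 0) ->
  (exists E, GPC a beta E /\ E rho = sigma) -> psd (Qmx rho sigma).
Proof.
move=> hnd hr [E [[[hl htr hcp] _ hcov] hE]].
have hl' : linE E := hl.
pose F x y := E (delta_mx x y).
have hz := off_zero hl' hcov hnd.
pose om := \col_p (((mxtens_unindex p).1 == (mxtens_unindex p).2)%:R : C) : 'cV[C]_(m * m).
have hG := hcp m (om *m adjmx om) (psd_rank1 om).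
pose G := ampl E (om *m adjmx om).
have GE : forall x y z w, G (mxtens_index (x, z)) (mxtens_index (y, w)) = F x y z w.
  move=> x y z w; rewrite /G /ampl mxE !mxtens_indexK /= /F.
  congr (E _ _ _); apply/matrixP => a0 b.
  rewrite mxE rank1E !mxE !mxtens_indexK /= conjc_nat -natrM mulnb.
  by rewrite (eq_sym x a0) (eq_sym y b).
pose h := fun x : 'I_m => mxtens_index (x, x).
pose P := \matrix_(p, x) ((p == h x)%:R : C).
have hC : psd (adjmx P *m G *m P) := psd_congr P hG.
have CE : forall x y, (adjmx P *m G *m P) x y = F x y x y.
  by move=> x y; rewrite compressE GE.
have Fd : forall x z, 0 <= F x x z z.
  by move=> x z; rewrite -GE; apply: psd_diag_ge0.
have Ftr : forall x, \sum_z F x x z z = 1.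
  move=> x; have := htr (delta_mx x x); rewrite /mxtrace => ->.
  rewrite (bigD1 x) //= big1 ?addr0; first by rewrite mxE eqxx.
  by move=> k hk; rewrite mxE (negbTE hk).
have Fle : forall x, F x x x x <= 1.
  move=> x; rewrite -(Ftr x) (bigD1 x) //= lerDl.
  by apply: sumr_ge0 => z _.
have Erho : E rho = \sum_x \sum_y rho x y *: F x y.
  rewrite {1}(matrix_sum_delta rho) chS //; apply: eq_bigr => x _.
  by rewrite chS //; apply: eq_bigr => y _; rewrite chZ.
have Soff : forall z w, z != w -> sigma z w = rho z w * F z w z w.
  move=> z w hzw; rewrite -hE Erho summxE (bigD1 z) //= [X in _ + X]big1 => [|x hx].
    rewrite addr0 summxE (bigD1 w) //= [X in _ + X]big1 => [|y hy].
      by rewrite addr0 mxE.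
    rewrite mxE hz ?mulr0 //.
    by apply: contra hy => /eqP [->].
  rewrite summxE big1 // => y _; rewrite mxE hz ?mulr0 //.
  by apply: contra hx => /eqP [->].
have -> : Qmx rho sigma = (adjmx P *m G *m P) + diag_mx (\row_x (1 - F x x x x)).
  apply/matrixP => i j; rewrite QmxE [RHS]mxE CE [diag_mx _ i j]mxE mxE.
  case: (eqVneq i j) => [->|ne]; first by rewrite mulr1n addrC subrK.
  by rewrite mulr0n addr0 Soff // mulrC mulKf.
apply: psd_add hC (psd_diagm _) => x.
by rewrite subr_ge0.
Qed.

End Aux8.

Unset Implicit Arguments.

Theorem theorem4 (R : realType) (m : nat) (a : 'I_m -> R) (beta : R)
  (rho sigma : 'M[R[i]]_m) :
  0 < beta ->
  nondeg_bohr a ->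
  is_state rho -> is_state sigma ->
  (forall x y : 'I_m, rho x y != 0) ->
  (forall x : 'I_m, rho x x = sigma x x) ->
  (exists E : 'M[R[i]]_m -> 'M[R[i]]_m, GPC a beta E /\ E rho = sigma)
  <-> psd (Qmx rho sigma).
Proof.
move=> _ hnd _ _ hr hd; split.
  exact: onlyif_dir.
exact: if_dir.
Qed.
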